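(* For all integers $n\ge 3$ and $0\le r\le n$, $$N_0^{n,r}=\frac{2}{n-1}\binom{n-1}{r}\binom{n-1}{n-r}\quad\text{and}\quad N_1^{n,r}=2N_0^{n,r}.$$
   Context: A lattice path from $(0,0)$ to $(r,n-r)$ (with integers $n\ge 1$, $0\le r\le n$) is a sequence of lattice points $v_0=(0,0),v_1,\dots,v_n=(r,n-r)$ with each step $v_i-v_{i-1}\in\{(1,0),(0,1)\}$ (an E step or an N step); its vertex set is $\{v_0,\dots,v_n\}$. For $k\ge 0$, $N_k^{n,r}$ denotes the number of ordered pairs $(P,Q)$ of lattice paths from $(0,0)$ to $(r,n-r)$ such that the intersection of their vertex sets, with the two points $(0,0)$ and $(r,n-r)$ removed, has exactly $k$ elements. Binomial coefficients $\binom{a}{b}$ with $a\ge 0$ are $0$ if $b<0$ or $b>a$. *)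

(* Defs.v *)
From mathcomp Require Import all_boot all_order all_algebra.
Set Implicit Arguments. Unset Strict Implicit. Unset Printing Implicit Defensive.

(* A lattice path with n steps is encoded by its step sequence:
   true = E step (1,0), false = N step (0,1). *)

Definition vertex (s : seq bool) (i : nat) : nat * nat :=
  (count id (take i s), i - count id (take i s)).

Definition vertices (s : seq bool) : seq (nat * nat) :=
  [seq vertex s i | i <- iota 0 (size s).+1].

(* s is a lattice path from (0,0) to (r, n-r) (it has n steps, r of them E). *)
Definition is_lpath (n r : nat) (s : n.-tuple bool) : bool :=
  count id s == r.

Definition common_inner (n r : nat) (P Q : seq bool) : nat :=
  size (undup [seq v <- vertices P |
                 (v \in vertices Q) && (v != (0, 0)) && (v != (r, n - r))]).

Definition Nk (k n r : nat) : nat :=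
  #|[set PQ : n.-tuple bool * n.-tuple bool |
      [&& is_lpath r PQ.1, is_lpath r PQ.2 & common_inner n r PQ.1 PQ.2 == k]]|.

(* Main.v *)
Require Import Defs.
From mathcomp Require Import all_boot all_order all_algebra.
From mathcomp Require Import ring lra zify.
Set Implicit Arguments. Unset Strict Implicit. Unset Printing Implicit Defensive.
Import GRing.Theory Num.Theory.
Local Open Scope ring_scope.

Definition bz (m : nat) (k : int) : int :=
  if (0 <= k) then ('C(m, absz k))%:Z else 0.

Lemma bzneg m k : k < 0 -> bz m k = 0.
Proof. by rewrite /bz; case: ifP => //; lia. Qed.

Lemma bzS m k : bz m.+1 k = bz m k + bz m (k - 1).
Proof.
case: k => [[|j]|j].
- by rewrite /bz /= !bin0.
- have -> : (Posz j.+1 - 1) = Posz j by rewrite -addn1 PoszD addrK.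
  by rewrite /bz /= binS PoszD addrC.
- rewrite !bzneg //; rewrite NegzE; lia.
Qed.

Lemma bz0 k : bz 0 k = (k == 0)%:R.
Proof. by case: k => [[|j]|j]; rewrite /bz //= bin0. Qed.


Definition All (m : nat) (a b : int) : int := bz m a * bz m b.
Definition trans (f : int -> int -> int) (a b : int) : int :=
  f a b + f a (b - 1) + f (a - 1) b + f (a - 1) (b - 1).
Definition D (m : nat) (a b : int) : int := bz m (a - 1) * bz m b - bz m a * bz m (b - 1).
Definition sg (a b : int) : int := if b <= a then 1 else -1.
Definition f0 (L : nat) (a b : int) : int :=
  if L is L'.+1 then sg a b * D L' a b else ((a == 0) && (b == 0))%:R.
Definition cA (L : nat) (a b : int) : int :=
  match L with
  | 0 => 0
  | 1 => 2 * All 0 a b + 2 * All 0 (a - 1) (b - 1)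
  | L'.+2 => 2 * All L'.+1 a b + 2 * All L'.+1 (a - 1) (b - 1) - All L' a b
             + 2 * All L' (a - 1) (b - 1) - All L' (a - 1 - 1) (b - 1 - 1)
  end.
Definition F1 L a b := f0 L a b - All L a b + cA L a b.

Lemma allrec m a b : All m.+1 a b = trans (All m) a b.
Proof. rewrite /All /trans !bzS; ring. Qed.

Lemma Drec m a b : D m.+1 a b = trans (D m) a b.
Proof. rewrite /D /trans !bzS; ring. Qed.

Lemma Daa m a : D m a a = 0.
Proof. rewrite /D; ring. Qed.

Lemma Dsym m a b : D m b a = - D m a b.
Proof. rewrite /D; ring. Qed.

Lemma sgD_ge m a b : b <= a -> sg a b * D m a b = D m a b.
Proof. by rewrite /sg => ->; rewrite mul1r. Qed.

Lemma sgD_le m a b : a <= b -> sg a b * D m a b = - D m a b.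
Proof.
rewrite /sg => ab; case: ifP => ba; last by rewrite mulN1r.
have -> : a = b by apply/eqP; rewrite Order.POrderTheory.eq_le ab ba.
by rewrite Daa mulr0 oppr0.
Qed.

Lemma All0ne x y : x != y -> All 0 x y = 0.
Proof.
rewrite /All !bz0; case: (x =P 0) => [->|]; case: (y =P 0) => [->|] //=; rewrite ?mulr0 ?mul0r //.
Qed.

Lemma f0rec L a b : a != b -> f0 L.+1 a b = trans (f0 L) a b.
Proof.
move=> ab; case: L => [|L].
  rewrite /f0 /trans /D /sg !bz0.
  move: ab; case: (a =P 0); case: (b =P 0); case: (a - 1 =P 0); case: (b - 1 =P 0);
    case: ifP => /=; try lia.

rewrite [f0 L.+2 a b]/f0 Drec /trans /f0.
have [ba|ab'] := lerP b a.
  rewrite [sg a b]/sg ba mul1r !sgD_ge //; try lia.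
rewrite [sg a b]/sg Order.POrderTheory.lt_geF // mulN1r !sgD_le; try lia.
Qed.

Lemma cASS L a b : cA L.+2 a b = 2 * All L.+1 a b + 2 * All L.+1 (a - 1) (b - 1) - All L a b
             + 2 * All L (a - 1) (b - 1) - All L (a - 1 - 1) (b - 1 - 1).
Proof. by []. Qed.
Lemma cA1 a b : cA 1 a b = 2 * All 0 a b + 2 * All 0 (a - 1) (b - 1).
Proof. by []. Qed.

Lemma cArec L a b : cA L.+3 a b = trans (cA L.+2) a b.
Proof. rewrite /trans !cASS !allrec /trans !allrec /trans; ring. Qed.

Lemma cArec_ne L a b : a != b -> cA L.+1 a b = trans (cA L) a b.
Proof.
move=> ab; case: L => [|[|L]]; last exact: cArec.
- rewrite cA1 /trans !All0ne; try lia. by rewrite /cA; ring.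
- rewrite cASS (All0ne (x := a) (y := b)) // (All0ne (x := a - 1) (y := b - 1));
    last lia.
  rewrite (All0ne (x := a - 1 - 1) (y := b - 1 - 1)); last lia.
  rewrite !allrec /trans !cA1; ring.
Qed.

Lemma F1rec L a b : a != b -> F1 L.+1 a b = trans (F1 L) a b.
Proof.
move=> ab; rewrite /F1 f0rec // cArec_ne // allrec /trans; ring.
Qed.

Lemma f0aa L a : f0 L.+1 a a = 0.
Proof. by rewrite /f0 Daa mulr0. Qed.

Lemma transf0 L a : trans (f0 L.+1) a a = 2 * D L a (a - 1).
Proof.
rewrite /trans !f0aa /f0 sgD_ge; last lia.
rewrite sgD_le; last lia.
rewrite (Dsym L a (a - 1)); ring.
Qed.

Lemma key L a : trans (f0 L) a a = - All L.+1 a a + cA L.+1 a a.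
Proof.
case: L => [|L].
  rewrite /trans /f0 cA1 /All !bzS !bz0.
  case: (a =P 0); case: (a - 1 =P 0); case: (a - 1 - 1 =P 0) => /=; lia.
rewrite transf0 cASS /All /D !bzS; ring.
Qed.
Fixpoint allb (L : nat) : seq (seq bool) :=
  if L is L'.+1 then [seq rcons s x | s <- allb L', x <- [:: false; true]]
  else [:: [::]].

Definition zc (s t : seq bool) : nat :=
  count (fun i => count id (take i s) == count id (take i t)) (iota 1 (size s)).

Definition Scnt (k L : nat) (a b : int) : nat :=
  (\sum_(s <- allb L) (\sum_(t <- allb L)
     nat_of_bool [&& (count id s)%:Z == a, (count id t)%:Z == b & zc s t == k])%N)%N.

Lemma allbS L : allb L.+1 = [seq rcons s x | s <- allb L, x <- [:: false; true]].
Proof. by []. Qed.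

Lemma mem_allb L s : (s \in allb L) = (size s == L).
Proof.
elim: L s => [|L IH] s; first by case: s.
rewrite allbS; apply/idP/idP => [/allpairsP [[s' x] [/= Hs' _ ->]]|].
  by rewrite size_rcons; move: Hs'; rewrite IH => /eqP ->.
case/lastP: s => [|s' x]; first by [].
rewrite size_rcons eqSS => Hs; apply/allpairsP; exists (s', x); split => //; first by rewrite IH.
by case: x.
Qed.

Lemma allb_uniq L : uniq (allb L).
Proof.
elim: L => [|L IH] //.
rewrite allbS; apply: allpairs_uniq => // [[s x] [t y]] _ _ /= E.
by case/rcons_inj: E => -> ->.
Qed.

Lemma count_rcons' (s : seq bool) x : count id (rcons s x) = (count id s + x)%N.
Proof. by rewrite -cats1 count_cat /= addn0. Qed.

Lemma zc_rcons s t x y : size s = size t ->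
  zc (rcons s x) (rcons t y) = (zc s t + (count id (rcons s x) == count id (rcons t y)))%N.
Proof.
move=> st; rewrite /zc size_rcons -[(size s).+1]addn1 iotaD count_cat /= addn0.
rewrite add1n (take_oversize (s := rcons s x)) ?size_rcons //.
rewrite (take_oversize (s := rcons t y)) ?size_rcons -?st //.
congr (_ + _)%N; apply: eq_in_count => i; rewrite mem_iota => /andP[_ Hi].
rewrite -!cats1 !takel_cat //; lia.
Qed.

Lemma term_rcons s t (x y : bool) k a b : size s = size t ->
 [&& (count id (rcons s x))%:Z == a, (count id (rcons t y))%:Z == b
   & zc (rcons s x) (rcons t y) == k] =
 [&& (count id s)%:Z == a - (x : nat)%:Z, (count id t)%:Z == b - (y : nat)%:Z
   & (if a == b then (zc s t).+1 == k else zc s t == k)].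
Proof.
move=> st; rewrite zc_rcons // !count_rcons'.
have H1 : (((count id s + x)%N)%:Z == a) = ((count id s)%:Z == a - (x : nat)%:Z).
  by apply/eqP/eqP; case: x; lia.
have H2 : (((count id t + y)%N)%:Z == b) = ((count id t)%:Z == b - (y : nat)%:Z).
  by apply/eqP/eqP; case: y; lia.
rewrite H1 H2; case: eqP => //= e1; case: eqP => //= e2.
have -> : (count id s + x == count id t + y)%N = (a == b).
  by apply/eqP/eqP; move: e1 e2; case: x {H1}; case: y {H2}; lia.
by case: (a == b); rewrite ?addn1 ?addn0.
Qed.

Lemma Srec k L a b : Scnt k L.+1 a b =
  (\sum_(x <- [:: false; true]) (\sum_(y <- [:: false; true])
   (\sum_(s <- allb L) (\sum_(t <- allb L)
     nat_of_bool [&& (count id s)%:Z == (a - (x : nat)%:Z)%R, (count id t)%:Z == (b - (y : nat)%:Z)%R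
       & (if a == b then (zc s t).+1 == k else zc s t == k)])%N)%N)%N)%N.
Proof.
rewrite /Scnt allbS big_allpairs_dep exchange_big; apply: eq_bigr => x _.
rewrite [RHS]exchange_big big_seq_cond [RHS]big_seq_cond.
apply: eq_bigr => s /andP[Hs _].
rewrite big_allpairs_dep exchange_big; apply: eq_bigr => y _.
rewrite big_seq_cond [RHS]big_seq_cond; apply: eq_bigr => t /andP[Ht _].
rewrite term_rcons //.
by move: Hs Ht; rewrite !mem_allb => /eqP -> /eqP ->.
Qed.

Lemma S_ne k L a b : a != b ->
  (Scnt k L.+1 a b)%:Z = trans (fun a b => (Scnt k L a b)%:Z) a b.
Proof.
move=> ab; rewrite Srec (negbTE ab) !big_cons !big_nil /trans /Scnt.
rewrite !addn0 !PoszD !subr0; ring.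
Qed.

Lemma S_eq k L a :
  (Scnt k.+1 L.+1 a a)%:Z = trans (fun a b => (Scnt k L a b)%:Z) a a.
Proof.
rewrite Srec eqxx !big_cons !big_nil /trans /Scnt.
rewrite !addn0 !PoszD !subr0; ring.
Qed.

Lemma S_eq0 L a : Scnt 0 L.+1 a a = 0%N.
Proof.
rewrite Srec eqxx; apply: big1 => x _; apply: big1 => y _.
apply: big1 => s _; apply: big1 => t _.
by rewrite (_ : ((zc s t).+1 == 0) = false) // !andbF.
Qed.

Lemma S0f L a b : (Scnt 0 L a b)%:Z = f0 L a b.
Proof.
elim: L a b => [|L IH] a b.
  rewrite /Scnt /= !big_cons !big_nil /f0 /zc /=.
  by rewrite !addn0 andbT [0%Z == a]eq_sym [0%Z == b]eq_sym; case: (_ && _).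
have [->|ab] := eqVneq a b; first by rewrite S_eq0 f0aa.
rewrite S_ne // f0rec // /trans !IH.
by [].
Qed.


Lemma S1f L a b : (Scnt 1 L a b)%:Z = F1 L a b.
Proof.
elim: L a b => [|L IH] a b.
  rewrite /Scnt /= !big_cons !big_nil /F1 /f0 /All /cA !bz0 /zc /= !andbF /=.
  by case: (a == 0); case: (b == 0); rewrite /= ?mulr0 ?mul0r ?mulr1.
have [->|ab] := eqVneq a b.
  rewrite S_eq /F1 f0aa.
  have -> : trans (fun a b => (Scnt 0 L a b)%:Z) b b = trans (f0 L) b b.
    by rewrite /trans !S0f.
  rewrite key; ring.
rewrite S_ne // F1rec // /trans !IH.
by [].
Qed.

Lemma N0val L r : (Scnt 1 L.+2 r r)%:Z = 2 * D L r (r - 1).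
Proof.
rewrite S_eq -transf0 /trans !S0f //.
Qed.

Lemma N1val L r : Scnt 2 L.+3 r r = (2 * Scnt 1 L.+3 r r)%N.
Proof.
apply/eqP; rewrite -eqz_nat; apply/eqP. rewrite PoszM.
rewrite S_eq.
have -> : trans (fun a b => (Scnt 1 L.+2 a b)%:Z) r r = trans (F1 L.+2) r r.
  by rewrite /trans !S1f.
rewrite S_eq.
have -> : trans (fun a b => (Scnt 0 L.+2 a b)%:Z) r r = trans (f0 L.+2) r r.
  by rewrite /trans !S0f.
have H : trans (F1 L.+2) r r =
    trans (f0 L.+2) r r - trans (All L.+2) r r + trans (cA L.+2) r r.
  by rewrite /trans /F1; ring.
rewrite H -allrec -cArec key; ring.
Qed.

Lemma count_take_le (P : seq bool) i : (count id (take i P) <= i)%N.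
Proof. by apply: leq_trans (count_size _ _) _; rewrite size_take_min geq_minl. Qed.

Lemma vertex_inj P : injective (vertex P).
Proof.
move=> i j; rewrite /vertex => [[E1 E2]].
have h1 := count_take_le P i; have h2 := count_take_le P j; lia.
Qed.

Lemma inner_pt n r P Q i : size P = n -> size Q = n -> count id P = r ->
  (0 < i < n)%N ->
  ((vertex P i \in vertices Q) && (vertex P i != (0, 0)%N) && (vertex P i != (r, n - r)%N))
  = (count id (take i P) == count id (take i Q)).
Proof.
move=> sP sQ cP /andP[i0 iN].
have hi := count_take_le P i.
have hr : (r <= n)%N by rewrite -cP -sP count_size.
have -> : (vertex P i != (0, 0)%N).
  by rewrite /vertex; apply/eqP => [[E1 E2]]; lia.
have -> : (vertex P i != (r, n - r)%N).
  by rewrite /vertex; apply/eqP => [[E1 E2]]; lia.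
rewrite !andbT; apply/mapP/eqP => [[j Hj]|E].
  rewrite /vertex => [[E1 E2]].
  have hj := count_take_le Q j; have eij : j = i by lia.
  by rewrite eij in E1.
exists i; first by rewrite mem_iota sQ; lia.
by rewrite /vertex E.
Qed.

Lemma ci_zc n r P Q : size P = n.+1 -> size Q = n.+1 -> count id P = r -> count id Q = r ->
  zc P Q = (common_inner n.+1 r P Q).+1.
Proof.
move=> sP sQ cP cQ.
have Hi : iota 1 n.+1 = iota 1 n ++ [:: n.+1] by have := iotaD 1 n 1; rewrite addn1 add1n.
have H0 : iota 0 n.+2 = 0 :: (iota 1 n ++ [:: n.+1]) by rewrite -Hi.
rewrite /common_inner /vertices filter_map undup_id; last first.
  by rewrite map_inj_uniq; [exact: filter_uniq (iota_uniq _ _)| exact: vertex_inj].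
have cc : forall (p : pred nat) x l, count p (x :: l) = (p x + count p l)%N by [].
rewrite size_map size_filter sP H0 /zc sP Hi cc !count_cat.
set pr := preim _ _.
have -> : pr 0%N = false by rewrite /pr /= /vertex take0 /= andbF.
have -> : count pr [:: n.+1] = 0%N.
  by rewrite /= /pr /= /vertex take_oversize ?sP ?cP // eqxx !andbF.
rewrite [count _ [:: n.+1]]/= !take_oversize ?sP ?sQ ?cP ?cQ ?eqxx //.
rewrite add0n !addn0 addn1; congr _.+1.
apply: eq_in_count => i; rewrite mem_iota => /andP[h1 h2].
by rewrite /pr /= inner_pt //; lia.
Qed.

Lemma tuple_sum L (F : seq bool -> nat) :
  (\sum_(t : L.-tuple bool) F t = \sum_(s <- allb L) F s)%N.
Proof.
rewrite -(big_map (@tval L bool) xpredT F).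
apply: perm_big; apply: uniq_perm.
- by rewrite map_inj_uniq ?index_enum_uniq //; exact: val_inj.
- exact: allb_uniq.
move=> s; rewrite mem_allb; apply/mapP/idP => [[t _ ->]|Hs].
  by rewrite size_tuple.
by exists (Tuple Hs); rewrite ?mem_index_enum.
Qed.

Lemma tuple_sum2 L (F : seq bool -> seq bool -> nat) :
  (\sum_(t : L.-tuple bool) (\sum_(u : L.-tuple bool) F t u)%N =
   \sum_(s <- allb L) (\sum_(v <- allb L) F s v)%N)%N.
Proof.
transitivity (\sum_(t : L.-tuple bool) (\sum_(v <- allb L) F t v)%N)%N.
  by apply: eq_bigr => t _; exact: tuple_sum.
exact: (tuple_sum L (fun t => (\sum_(v <- allb L) F t v)%N)).
Qed.

Lemma Nk_S k n r : Nk k n.+1 r = Scnt k.+1 n.+1 r r.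
Proof.
rewrite /Nk cardsE -sum1_card big_mkcond /=.
pose F := fun s t : seq bool => if [&& count id s == r, count id t == r &
   common_inner n.+1 r s t == k] then 1%N else 0%N.
transitivity (\sum_(P : (n.+1).-tuple bool) (\sum_(Q : (n.+1).-tuple bool) F P Q)%N)%N.
  by rewrite pair_bigA; apply: eq_bigr => -[P Q] _.
rewrite (tuple_sum2 _ F) /F.
rewrite /Scnt; apply: eq_big_seq => s; rewrite mem_allb => /eqP Hs.
apply: eq_big_seq => t; rewrite mem_allb => /eqP Ht.
rewrite !eqz_nat.
case: (count id s =P r) => //= cs; case: (count id t =P r) => //= ct.
by rewrite (ci_zc Hs Ht cs ct) eqSS; case: (_ == _).
Qed.

Lemma bzpos m (j : nat) : bz m (Posz j) = ('C(m, j))%:Z.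
Proof. by []. Qed.

Unset Implicit Arguments.

Theorem mainTheorem5 (n r : nat) (hn : (3 <= n)%N) (hr : (r <= n)%N) :
  ((Nk 0 n r)%:R : rat) =
    2%:R / (n.-1)%:R * ('C(n.-1, r))%:R * ('C(n.-1, n - r))%:R
  /\ Nk 1 n r = (2 * Nk 0 n r)%N.
Proof.
case: n hn hr => [|[|[|L]]] // _ hr.
rewrite !Nk_S N1val; split => //=.
have E := N0val L.+1 r.
rewrite /D in E.
case: r hr E => [|j] hr E.
  rewrite (bzneg _ (k := 0 - 1)) // (bzneg _ (k := 0 - 1 - 1)) // in E.
  have E0 : (Scnt 1 L.+3 0 0)%:Z = 0 by rewrite E; ring.
  have -> : Scnt 1 L.+3 0 0 = 0%N by apply/eqP; rewrite -eqz_nat E0.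
  by rewrite subn0 (@bin_small L.+2 L.+3) // !mulr0n mulr0.
have hj : (j <= L.+2)%N by lia.
case: (ltnP L.+1 j) => hjm.
  have jL : j = L.+2 by lia.
  subst j.
  rewrite (_ : Posz L.+3 - 1 = Posz L.+2) in E; last by rewrite -addn1 PoszD addrK.
  rewrite bzpos bin_small // bzpos bin_small // in E.
  have E0 : (Scnt 1 L.+3 L.+3 L.+3)%:Z = 0 by rewrite E; ring.
  have -> : Scnt 1 L.+3 L.+3 L.+3 = 0%N by apply/eqP; rewrite -eqz_nat E0.
  by rewrite (@bin_small L.+2 L.+3) // !mulr0n mulr0 mul0r.
set m := L.+1.
rewrite (_ : Posz j.+1 - 1 = Posz j) in E; last by rewrite -addn1 PoszD addrK.
set x := 'C(m, j); set u := 'C(m, j.+1).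
pose w := if j is j'.+1 then 'C(m, j') else 0%N.
have Bw : bz m (Posz j - 1) = w%:Z.
  rewrite /w; case: (j) => [|j']; first by rewrite bzneg.
  rewrite (_ : Posz j'.+1 - 1 = Posz j') //; by rewrite -addn1 PoszD addrK.
rewrite Bw !bzpos -/x -/u in E.
set N := Scnt 1 L.+3 j.+1 j.+1 in E *.
have Enat : (N + 2 * (u * w) = 2 * (x * x))%N.
  by apply/eqP; rewrite -eqz_nat PoszD !PoszM E; apply/eqP; ring.
have Nr : N%:R + 2 * (u%:R * w%:R) = 2 * (x%:R * x%:R) :> rat.
  by have := congr1 (fun k => k%:R : rat) Enat; rewrite /= natrD !natrM.
have hjm' : (j <= m)%N by rewrite /m; lia.
set p := (m - j)%N.
have mjp : m = (j + p)%N by rewrite /p; lia.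
have R1 : (j.+1 * u = p * x)%N by rewrite /u /x mul_bin_left.
have R2 : (j * x = p.+1 * w)%N.
  rewrite /w /x; case Ej : j => [|j']; first by rewrite !muln0.
  by rewrite mul_bin_left; congr (_ * _)%N; rewrite /p; lia.
have C1 : 'C(L.+2, j.+1) = (u + x)%N by rewrite binS.
have C2 : 'C(L.+2, L.+3 - j.+1) = (x + w)%N.
  rewrite subSS bin_sub //; rewrite /x /w; case: (j) => [|j'].
    by rewrite !bin0.
  by rewrite binS.
rewrite C1 C2 /=.
have R1r : (j%:R + 1) * u%:R = p%:R * x%:R :> rat.
  by have := congr1 (fun k => k%:R : rat) R1; rewrite /= !natrM natr1.
have R2r : j%:R * x%:R = (p%:R + 1) * w%:R :> rat.
  by have := congr1 (fun k => k%:R : rat) R2; rewrite /= !natrM natr1.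
have Hj : (j%:R + 1 : rat) != 0 by rewrite natr1 pnatr_eq0.
have Hp : (p%:R + 1 : rat) != 0 by rewrite natr1 pnatr_eq0.
have Hu : (u%:R : rat) = p%:R * x%:R / (j%:R + 1).
  by rewrite -R1r [_ * u%:R]mulrC mulfK.
have Hw : (w%:R : rat) = j%:R * x%:R / (p%:R + 1).
  by rewrite R2r [_ * w%:R]mulrC mulfK.
have HN : (N%:R : rat) = 2 * (x%:R * x%:R) - 2 * (u%:R * w%:R).
  by rewrite -Nr addrK.
have Hm : ((L.+2)%:R : rat) = j%:R + p%:R + 1.
  by rewrite -[L.+2]/(m.+1) mjp -addn1 !natrD.
rewrite HN Hm [(u + x)%:R]natrD [(x + w)%:R]natrD Hu Hw.
field.
by rewrite Hj Hp -natrD natr1 pnatr_eq0.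
Qed.
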